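(* Work on $\mathbb{R}^d$ with coordinates $x^\mu$ and smooth fields (non-singular at $x=0$). The map $\omega\mapsto e$ given by $$e^a_\mu(x)=\delta^a_\mu+\int_0^1 \omega^a_{\ b\mu}(tx)\,t\,x^b\,dt,$$ with inverse $e\mapsto\omega$ given by $\omega^a_{\ b}=\tfrac12\left(-e^c\wedge i_b i_a de^c+i_b de^a-i_a de^b\right)$, is a bijection between: (i) the space of spin-connections $\omega^a_{\ b}$ satisfying the Fock–Schwinger gauge condition $x^\mu\omega^a_{\ b\mu}(x)=0$ and the torsionless condition $de^a+\omega^a_{\ b}\wedge e^b=0$, where $e^a_\mu(x)=\delta^a_\mu+\int_0^1 \omega^a_{\ b\mu}(tx)\,t\,x^b\,dt$; (ii) the space of vielbeins $e^a=e^a_\mu dx^\mu$ satisfying $$x^\mu e^a_\mu(x)=x^a,\qquad x^a e^a_\mu(x)=x^\mu,\qquad i_a\mathcal L_{\mathfrak r}e^b=i_b\mathcal L_{\mathfrak r}e^a .$$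
   Context: Latin indices $a,b,c\in\{1,\dots,d\}$ are frame indices, Greek indices coordinate indices; frame indices are raised/lowered with $\delta_{ab}$, repeated indices summed, and $x^a=\delta^a_\mu x^\mu$. Spin-connections $\omega^a_{\ b}=\omega^a_{\ b\mu}dx^\mu$ are $\mathfrak{so}(d)$-valued 1-forms. A vielbein is a coframe $e^a=e^a_\mu dx^\mu$ (invertible matrix $e^a_\mu$); its dual vector fields are $e_a=e_a^{\ \mu}\partial_\mu$ with $e^a_\mu e_a^{\ \nu}=\delta^\nu_\mu$, and $i_a$ is the interior product with $e_a$. $\mathfrak r=x^\mu\partial_\mu$ is the radial vector field and $\mathcal L_{\mathfrak r}$ the Lie derivative along it (on a $p$-form, $(\mathcal L_{\mathfrak r}\sigma)_{\mu_1\dots\mu_p}=(x^\nu\partial_\nu+p)\sigma_{\mu_1\dots\mu_p}$). Conventions: $(d\omega)_{\mu_1\dots\mu_{p+1}}=(p+1)\partial_{[\mu_1}\omega_{\mu_2\dots\mu_{p+1}]}$, $(\omega\wedge\sigma)_{\mu_1\dots\mu_{p+q}}=\frac{(p+q)!}{p!q!}\omega_{[\mu_1\dots\mu_p}\sigma_{\mu_{p+1}\dots\mu_{p+q}]}$, $(i_X\omega)_{\mu_2\dots\mu_p}=X^{\mu_1}\omega_{\mu_1\dots\mu_p}$. *)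

(* Defs.v *)
From HB Require Import structures.
From mathcomp Require Import all_boot all_order all_algebra.
From mathcomp Require Import all_classical all_reals all_analysis.
Set Implicit Arguments. Unset Strict Implicit. Unset Printing Implicit Defensive.
Import Order.TTheory GRing.Theory Num.Theory.
Import numFieldNormedType.Exports.
Local Open Scope classical_set_scope.
Local Open Scope ring_scope.

(* Points of R^d are row vectors 'rV[R]_d; coordinate x^mu is  x ord0 mu.
   Frame and coordinate indices both range over 'I_d. *)

Section Fields.
Variables (R : realType) (d : nat).
Notation V := 'rV[R]_d.

Definition coord (x : V) (mu : 'I_d) : R := x ord0 mu.

Definition partial (mu : 'I_d) (f : V -> R) : V -> R :=
  fun x => 'D_(delta_mx ord0 mu) f x.

Fixpoint iter_partial (s : seq 'I_d) (f : V -> R) : V -> R :=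
  match s with
  | [::] => f
  | mu :: s' => partial mu (iter_partial s' f)
  end.

Definition smooth (f : V -> R) : Prop :=
  forall s : seq 'I_d,
    continuous (iter_partial s f) /\
    (forall (mu : 'I_d) (x : V), derivable (iter_partial s f) x (delta_mx ord0 mu)).

(* A spin-connection: omega a b mu x = omega^a_{b mu}(x).
   A vielbein candidate: e a mu x = e^a_mu(x). *)
Definition spin_conn := 'I_d -> 'I_d -> 'I_d -> V -> R.
Definition frame := 'I_d -> 'I_d -> V -> R.

Definition emx (e : frame) (x : V) : 'M[R]_d := \matrix_(a, mu) e a mu x.

(* dual vector fields: e_a^mu(x), satisfying sum_a e^a_mu e_a^nu = delta^nu_mu *)
Definition edual (e : frame) (a mu : 'I_d) (x : V) : R := invmx (emx e x) mu a.

Definition is_vielbein (e : frame) : Prop :=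
  (forall a mu, smooth (e a mu)) /\ (forall x, emx e x \in unitmx).

Definition dform (e : frame) (a mu nu : 'I_d) (x : V) : R :=
  partial mu (e a nu) x - partial nu (e a mu) x.

Definition e_of_omega (om : spin_conn) : frame :=
  fun a mu x =>
    (a == mu)%:R +
    \int[lebesgue_measure]_(t in `[0%R, 1%R])
       (\sum_(b < d) om a b mu (t *: x) * t * coord x b).

Definition omega_of_e (e : frame) : spin_conn :=
  fun a b nu x =>
    2^-1 * ( - (\sum_(c < d) e c nu x *
                  (\sum_(mu < d) \sum_(rho < d)
                     edual e b rho x * edual e a mu x * dform e c mu rho x))
             + \sum_(mu < d) edual e b mu x * dform e a mu nu x
             - \sum_(mu < d) edual e a mu x * dform e b mu nu x).

(* (L_r sigma)_mu = (x^nu d_nu + 1) sigma_mu for a 1-form sigma;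
   here applied to e^b *)
Definition lie_r (e : frame) (b mu : 'I_d) (x : V) : R :=
  \sum_(nu < d) coord x nu * partial nu (e b mu) x + e b mu x.

Definition i_lie_r (e : frame) (a b : 'I_d) (x : V) : R :=
  \sum_(mu < d) edual e a mu x * lie_r e b mu x.

Definition space_i (om : spin_conn) : Prop :=
  (forall a b mu, smooth (om a b mu)) /\
  (forall a b mu x, om a b mu x = - om b a mu x) /\
  (forall a b x, \sum_(mu < d) coord x mu * om a b mu x = 0) /\
  is_vielbein (e_of_omega om) /\
  (forall a mu nu x,
     dform (e_of_omega om) a mu nu x +
     \sum_(b < d) (om a b mu x * e_of_omega om b nu x
                   - om a b nu x * e_of_omega om b mu x) = 0).

Definition space_ii (e : frame) : Prop :=
  is_vielbein e /\
  (forall a x, \sum_(mu < d) coord x mu * e a mu x = coord x a) /\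
  (forall mu x, \sum_(a < d) coord x a * e a mu x = coord x mu) /\
  (forall a b x, i_lie_r e a b x = i_lie_r e b a x).

End Fields.

(* Main.v *)
Require Import Defs.
From HB Require Import structures.
From mathcomp Require Import all_boot all_order all_algebra.
From mathcomp Require Import all_classical all_reals all_analysis.
From mathcomp Require Import perm.
From mathcomp Require Import ring lra.
Import Order.TTheory GRing.Theory Num.Theory.
Import numFieldNormedType.Exports.
Local Open Scope classical_set_scope.
Local Open Scope ring_scope.
Set Implicit Arguments. Unset Strict Implicit. Unset Printing Implicit Defensive.

Section Smooth.
Variables (R : realType) (d : nat).
Local Notation V := 'rV[R]_d.
Local Notation dl mu := (delta_mx ord0 mu : V).
Implicit Types (f g : V -> R).

Definition Cn (n : nat) (f : V -> R) : Prop :=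
  forall s : seq 'I_d, (size s <= n)%N ->
    continuous (iter_partial s f) /\
    (forall mu x, derivable (iter_partial s f) x (dl mu)).

Lemma iter_rcons s mu (f : V -> R) :
  iter_partial (rcons s mu) f = iter_partial s (partial mu f).
Proof. by elim: s => //= a s ->. Qed.

Lemma Cn0 f : Cn 0 f <-> continuous f /\ (forall mu x, derivable f x (dl mu)).
Proof.
split; first by move=> /(_ [::] isT).
by move=> H [|//].
Qed.

Lemma CnS n f : Cn n.+1 f <->
  [/\ continuous f, (forall mu x, derivable f x (dl mu)) &
      forall mu, Cn n (partial mu f)].
Proof.
split.
  move=> H; have [c dv] := H [::] isT; split => // mu s sn.
  by rewrite -iter_rcons; apply: H; rewrite size_rcons.
case=> c dv H s; case/lastP: s => [|s mu] //.
rewrite size_rcons ltnS iter_rcons => sn; exact: H.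
Qed.

Lemma Cn_le m n f : (m <= n)%N -> Cn n f -> Cn m f.
Proof. by move=> mn H s sm; apply: H; apply: leq_trans sm mn. Qed.

Lemma smoothE f : smooth f <-> forall n, Cn n f.
Proof.
split; first by move=> H n s _; apply: H.
by move=> H s; apply: (H (size s)).
Qed.

Lemma partialD f g x mu : derivable f x (dl mu) -> derivable g x (dl mu) ->
  partial mu (fun y => f y + g y) x = partial mu f x + partial mu g x.
Proof. by move=> df dg; rewrite /partial -deriveD. Qed.

Lemma partialM f g x mu : derivable f x (dl mu) -> derivable g x (dl mu) ->
  partial mu (fun y => f y * g y) x = partial mu f x * g x + f x * partial mu g x.
Proof.
move=> df dg; rewrite /partial.
have -> : (fun y => f y * g y) = (f * g) by [].
rewrite deriveM // addrC; congr (_ + _); exact: mulrC.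
Qed.

End Smooth.

Section Smooth2.
Variables (R : realType) (d : nat).
Local Notation V := 'rV[R]_d.
Local Notation dl mu := (delta_mx ord0 mu : V).
Implicit Types (f g : V -> R).

Lemma Cn_cst n (c : R) : Cn n (fun _ : V => c).
Proof.
elim: n c => [|n IH] c.
  by apply/Cn0; split=> [x|mu x]; [exact: cst_continuous|exact: derivable_cst].
apply/CnS; split=> [x|mu x|mu]; [exact: cst_continuous|exact: derivable_cst|].
have -> : partial mu (fun _ : V => c) = (fun _ => 0).
  by apply/funext => x; rewrite /partial; exact: (derive_cst c).
exact: IH.
Qed.

Lemma CnD n f g : Cn n f -> Cn n g -> Cn n (fun x => f x + g x).
Proof.
elim: n f g => [|n IH] f g.
  move=> /Cn0[cf df] /Cn0[cg dg]; apply/Cn0; split.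
    by move=> x; exact: (continuousD (cf x) (cg x)).
  by move=> mu x; apply: derivableD.
move=> /CnS[cf df Hf] /CnS[cg dg Hg]; apply/CnS; split.
- by move=> x; exact: (continuousD (cf x) (cg x)).
- by move=> mu x; apply: derivableD.
move=> mu.
have -> : partial mu (fun x => f x + g x) = (fun x => partial mu f x + partial mu g x).
  by apply/funext => x; rewrite partialD.
exact: IH.
Qed.

Lemma CnM n f g : Cn n f -> Cn n g -> Cn n (fun x => f x * g x).
Proof.
elim: n f g => [|n IH] f g.
  move=> /Cn0[cf df] /Cn0[cg dg]; apply/Cn0; split.
    by move=> x; exact: (continuousM (cf x) (cg x)).
  move=> mu x; have -> : (fun x => f x * g x) = f * g by [].
  by apply: derivableM.
move=> Cf Cg.
have Cf' := Cn_le (leqnSn n) Cf; have Cg' := Cn_le (leqnSn n) Cg.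
move: Cf Cg => /CnS[cf df Hf] /CnS[cg dg Hg]; apply/CnS; split.
- by move=> x; exact: (continuousM (cf x) (cg x)).
- move=> mu x; have -> : (fun x => f x * g x) = f * g by [].
  by apply: derivableM.
move=> mu.
have -> : partial mu (fun x => f x * g x) =
   (fun x => partial mu f x * g x + f x * partial mu g x).
  by apply/funext => x; rewrite partialM.
by apply: CnD; apply: IH.
Qed.

Lemma CnV n f : (forall x, f x != 0) -> Cn n f -> Cn n (fun x => (f x)^-1).
Proof.
move=> f0; elim: n f f0 => [|n IH] f f0.
  move=> /Cn0[cf df]; apply/Cn0; split.
    by move=> x; exact: (continuousV (f0 x) (cf x)).
  by move=> mu x; apply: derivableV.
move=> Cf; have Cf' := Cn_le (leqnSn n) Cf.
move: Cf => /CnS[cf df Hf]; apply/CnS; split.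
- by move=> x; exact: (continuousV (f0 x) (cf x)).
- by move=> mu x; apply: derivableV.
move=> mu.
have -> : partial mu (fun x => (f x)^-1) =
   (fun x => (-1) * ((f x)^-1 * ((f x)^-1 * partial mu f x))).
  apply/funext => x; rewrite /partial deriveV //.
  rewrite mulN1r mulrA -invfM -expr2; exact: mulNr.
by apply: CnM; [exact: Cn_cst|apply: CnM; [exact: IH|apply: CnM; [exact: IH|exact: Hf]]].
Qed.

Lemma Cn_sum n (I : Type) (r : seq I) (P : pred I) (F : I -> V -> R) :
  (forall i, P i -> Cn n (F i)) -> Cn n (fun x => \sum_(i <- r | P i) F i x).
Proof.
move=> H; elim: r => [|a r IH].
  have -> : (fun x => \sum_(i <- [::] | P i) F i x) = (fun _ => 0).
    by apply/funext => x; rewrite big_nil.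
  exact: Cn_cst.
have -> : (fun x => \sum_(i <- a :: r | P i) F i x) =
  (fun x => (if P a then F a x else 0) + \sum_(i <- r | P i) F i x).
  by apply/funext => x; rewrite big_cons; case: (P a); rewrite ?add0r.
apply: CnD => //; case: (boolP (P a)) => Pa; [exact: H|exact: Cn_cst].
Qed.

Lemma Cn_prod n (I : Type) (r : seq I) (P : pred I) (F : I -> V -> R) :
  (forall i, P i -> Cn n (F i)) -> Cn n (fun x => \prod_(i <- r | P i) F i x).
Proof.
move=> H; elim: r => [|a r IH].
  have -> : (fun x => \prod_(i <- [::] | P i) F i x) = (fun _ => 1).
    by apply/funext => x; rewrite big_nil.
  exact: Cn_cst.
have -> : (fun x => \prod_(i <- a :: r | P i) F i x) =
  (fun x => (if P a then F a x else 1) * \prod_(i <- r | P i) F i x).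
  by apply/funext => x; rewrite big_cons; case: (P a); rewrite ?mul1r.
apply: CnM => //; case: (boolP (P a)) => Pa; [exact: H|exact: Cn_cst].
Qed.

Lemma Cn_det n m (A : 'I_m -> 'I_m -> V -> R) :
  (forall i j, Cn n (A i j)) -> Cn n (fun x => \det (\matrix_(i, j) A i j x)).
Proof.
move=> H.
have -> : (fun x => \det (\matrix_(i, j) A i j x))
  = (fun x => \sum_(s : 'S_m) (-1) ^+ s * \prod_i A i (s i) x).
  apply/funext => x; rewrite /determinant; apply: eq_bigr => s _.
  by congr (_ * _); apply: eq_bigr => i _; rewrite mxE.
apply: Cn_sum => s _; apply: CnM; first exact: Cn_cst.
by apply: Cn_prod.
Qed.

Lemma smooth_Cn n f : smooth f -> Cn n f.
Proof. by move/smoothE. Qed.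

Lemma Cn_partial n f mu : Cn n.+1 f -> Cn n (partial mu f).
Proof. by case/CnS. Qed.

Lemma smooth_partial f mu : smooth f -> smooth (partial mu f).
Proof. by move/smoothE => H; apply/smoothE => n; apply: Cn_partial. Qed.

Lemma smooth_cont f : smooth f -> continuous f.
Proof. by move=> /(_ [::]) []. Qed.

Lemma smooth_der f : smooth f -> forall mu x, derivable f x (dl mu).
Proof. by move=> /(_ [::]) []. Qed.

Lemma smoothD f g : smooth f -> smooth g -> smooth (fun x => f x + g x).
Proof. by move=> /smoothE Hf /smoothE Hg; apply/smoothE => n; apply: CnD. Qed.
Lemma smoothM f g : smooth f -> smooth g -> smooth (fun x => f x * g x).
Proof. by move=> /smoothE Hf /smoothE Hg; apply/smoothE => n; apply: CnM. Qed.
Lemma smooth_cst c : smooth (fun _ : V => c).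
Proof. by apply/smoothE => n; apply: Cn_cst. Qed.
Lemma smooth_sum (I : Type) (r : seq I) (P : pred I) (F : I -> V -> R) :
  (forall i, P i -> smooth (F i)) -> smooth (fun x => \sum_(i <- r | P i) F i x).
Proof. by move=> H; apply/smoothE => n; apply: Cn_sum => i Pi; apply: smooth_Cn; apply: H. Qed.

Lemma smooth_edual (e : frame R d) : is_vielbein e -> forall a mu, smooth (edual e a mu).
Proof.
case=> se ue a mu.
have E : edual e a mu = fun x =>
   (\det (emx e x))^-1 * ((-1) ^+ (a + mu) *
     \det (\matrix_(i, j) e (lift a i) (lift mu j) x)).
  apply/funext => x; rewrite /edual /invmx ue mxE /adjugate mxE /cofactor.
  congr (_ * (_ * _)); congr (\det _); apply/matrixP => i j.
  by rewrite !mxE.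
rewrite E; apply/smoothE => n; apply: CnM.
  apply: CnV.
    by move=> x; have := ue x; rewrite unitmxE unitfE.
  by apply: Cn_det => i j; apply: smooth_Cn; apply: se.
apply: CnM; first exact: Cn_cst.
by apply: Cn_det => i j; apply: smooth_Cn; apply: se.
Qed.

End Smooth2.

Section Analysis.
Variables (R : realType) (d : nat).
Local Notation V := 'rV[R]_d.
Local Notation dl mu := (delta_mx ord0 mu : V).
Implicit Types (f g : V -> R).

Lemma is_derive_coord (x v : V) nu :
  is_derive x v (fun y : V => y ord0 nu) (v ord0 nu).
Proof.
have H : (fun h : R => h^-1 *: (((fun y : V => y ord0 nu) \o shift x) (h *: v)
            - x ord0 nu)) @ 0^' --> v ord0 nu.
  apply: cvg_near_cst; rewrite near_withinE; near=> h => h0.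
  by rewrite /= !mxE addrK; exact: mulKf.
by apply: DeriveDef; [apply/cvgP: H|apply: cvg_lim H].
Unshelve. all: by end_near. Qed.

Lemma partial_coord mu nu (x : V) :
  derivable (fun y : V => Defs.coord y nu) x (dl mu) /\
  partial mu (fun y : V => Defs.coord y nu) x = (mu == nu)%:R.
Proof.
have H := is_derive_coord x (dl mu) nu.
have H1 : derivable (fun y : V => y ord0 nu) x (dl mu) by apply: ex_derive.
have H2 : 'D_(dl mu) (fun y : V => y ord0 nu) x = (dl mu) ord0 nu by apply: derive_val.
split; first exact: H1.
rewrite /partial; change (fun y : V => Defs.coord y nu) with (fun y : V => y ord0 nu).
by rewrite H2 mxE eq_sym.
Qed.

Lemma is_derive_line f (a w : V) s :
  derivable f (a + s *: w) w ->
  is_derive s 1 (fun t : R => f (a + t *: w)) ('D_w f (a + s *: w)).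
Proof.
move=> df.
have E : (fun h : R => h^-1 *: (((fun t : R => f (a + t *: w)) \o shift s) (h *: 1)
              - f (a + s *: w))) =
         (fun h : R => h^-1 *: ((f \o shift (a + s *: w)) (h *: w) - f (a + s *: w))).
  apply/funext => h /=; congr (_ *: (f _ - _)).
  by rewrite [h *: 1]mulr1 scalerDl addrCA addrC.
apply: DeriveDef; first by rewrite /derivable E.
by rewrite /derive E.
Qed.

End Analysis.

Lemma MVT_any (R : realType) (g dg : R -> R) (a b : R) :
  (forall x : R, is_derive x (1 : R) g (dg x)) ->
  exists c, `|c - a| <= `|b - a| /\ g b - g a = dg c * (b - a).
Proof.
move=> H.
have cg : continuous g.
  move=> x; apply: differentiable_continuous; apply/derivable1_diffP.
  by have := H x => -[].
have [ab|ba] := leP a b.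
  have [c cab E] := @MVT_segment R g dg a b ab (fun x _ => H x)
     (continuous_subspaceT cg).
  exists c; split => //.
  move: cab; rewrite in_itv /= => /andP[ac cb].
  rewrite !ger0_norm ?subr_ge0 //; exact: lerB.
have [c cab E] := @MVT_segment R g dg b a (ltW ba) (fun x _ => H x)
     (continuous_subspaceT cg).
exists c; split.
  move: cab; rewrite in_itv /= => /andP[bc ca].
  rewrite !ler0_norm ?subr_le0 ?(ltW ba) // !opprB; exact: lerB.
by rewrite -opprB E -mulrN opprB.
Qed.

Section C1.
Variables (R : realType) (d : nat).
Local Notation V := 'rV[R]_d.
Local Notation dl mu := (delta_mx ord0 mu : V).
Implicit Types (f g : V -> R).

Lemma C1_is_derive f :
  (forall mu y, derivable f y (dl mu)) -> (forall mu, continuous (partial mu f)) ->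
  forall y v, is_derive y v f (\sum_nu v ord0 nu * partial nu f y).
Proof.
move=> df cf y v.
set L := \sum_nu _.
suff H : (fun h : R => h^-1 *: ((f \o shift y) (h *: v) - f y)) @ 0^' --> L.
  by apply: DeriveDef; [apply/cvgP: H | apply: cvg_lim H].
apply/cvgrPdist_lt => e e0.
set S := \sum_nu `|v ord0 nu| + 1.
have S0 : 0 < S by rewrite /S ltr_wpDl // sumr_ge0.
have vS j : `|v ord0 j| <= S.
  rewrite /S (bigD1 j) //= -addrA lerDl.
  apply: addr_ge0; [apply: sumr_ge0 => i _; exact: normr_ge0 | exact: ler01].
set ep := e / S.
have ep0 : 0 < ep by rewrite divr_gt0.
have : \forall z \near y, forall nu, `|partial nu f y - partial nu f z| < ep.
  have Hn nu : \forall z \near y, `|partial nu f y - partial nu f z| < ep.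
    exact: ((cvgrPdist_lt _ _).1 (cf nu y) ep ep0).
  exact: filter_forall Hn.
move=> /nbhs_ballP [r r0 Hr].
rewrite near_withinE; apply/nbhs_ballP; exists (r / S); first by rewrite /= divr_gt0.
move=> h /= hball h0.
have hr : `|h| * S < r.
  move: hball; rewrite /ball /= sub0r normrN => hb.
  by rewrite -ltr_pdivlMr.
pose w (k : nat) : V := \row_(j < d) (if (j < k)%N then v ord0 j else 0).
pose p (k : nat) : V := y + h *: w k.
have p0 : p 0%N = y.
  rewrite /p (_ : w 0%N = 0) ?scaler0 ?addr0 //.
  by apply/matrixP => i j; rewrite !mxE.
have pd : p d = h *: v + y.
  rewrite /p addrC (_ : w d = v) //.
  by apply/matrixP => i j; rewrite !mxE ltn_ord (ord1 i).
have step (k : 'I_d) : p k.+1 = p k + (h * v ord0 k) *: dl k.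
  apply/matrixP => i j; rewrite !mxE (ord1 i) /=.
  case: (ltngtP j k) => jk.
  - have jk' : (j == k) = false by apply/eqP => E; move: jk; rewrite E ltnn.
    by rewrite ltnS (ltnW jk) jk' mulr0 addr0.
  - have jk' : (j == k) = false by apply/eqP => E; move: jk; rewrite E ltnn.
    by rewrite ltnNge jk /= jk' !mulr0 !addr0.
  - have -> : j = k by apply: val_inj.
    by rewrite ltnSn eqxx mulr0 addr0 mulr1.
have tel : f (h *: v + y) - f y = \sum_(k < d) (f (p k.+1) - f (p k)).
  by rewrite -pd -[X in _ - f X]p0 -(telescope_sumr (fun k => f (p k)) (leq0n d)) big_mkord.
rewrite /= tel scaler_sumr /L -sumrB.
apply: (le_lt_trans (ler_norm_sum _ _ _)).
apply: (@le_lt_trans _ _ (\sum_(k < d) `|v ord0 k| * ep)).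
  apply: ler_sum => k _.
  have [c [cb E]] := @MVT_any R (fun s => f (p k + s *: dl k))
     (fun s => 'D_(dl k) f (p k + s *: dl k)) 0 (h * v ord0 k)
     (fun s => is_derive_line (df k _)).
  have Z : p k + 0 *: dl k = p k by apply/matrixP => i j; rewrite !mxE mul0r addr0.
  move: E; rewrite /= Z subr0 -step => ->.
  have -> : h^-1 *: ('D_(dl k) f (p k + c *: dl k) * (h * v ord0 k)) =
            v ord0 k * 'D_(dl k) f (p k + c *: dl k).
    by rewrite [LHS]mulrCA mulKf // mulrC.
  rewrite -mulrBr normrM ler_wpM2l // ltW //.
  apply: (Hr (p k + c *: dl k)).
  split => // i j; rewrite /ball /= !mxE (ord1 i) /=.
  rewrite opprD opprD !addrA subrr add0r -opprD normrN.
  move: cb; rewrite !subr0 normrM => cb.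
  case: (ltngtP j k) => jk.
  - have jk' : (j == k) = false by apply/eqP => E; move: jk; rewrite E ltnn.
    rewrite jk' mulr0 addr0 normrM.
    apply: le_lt_trans hr; exact: ler_wpM2l.
  - have jk' : (j == k) = false by apply/eqP => E; move: jk; rewrite E ltnn.
    by rewrite jk' !mulr0 addr0 normr0.
  - have -> : j = k by apply: val_inj.
    rewrite eqxx mulr0 add0r mulr1.
    apply: (le_lt_trans cb); apply: le_lt_trans hr; exact: ler_wpM2l.
by rewrite -mulr_suml /ep mulrA ltr_pdivrMr // mulrC ltr_pM2l // /S ltrDl ltr01.
Qed.

End C1.

Lemma sumrD' (R : realType) (I : Type) (r : seq I) (P : pred I) (F G : I -> R) :
  \sum_(i <- r | P i) (F i + G i) = \sum_(i <- r | P i) F i + \sum_(i <- r | P i) G i.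
Proof. exact: big_split. Qed.

Section Alg.
Variables (R : realType) (d : nat) (m E : 'I_d -> 'I_d -> R).
Hypothesis I1 : forall a b, \sum_mu m a mu * E mu b = (a == b)%:R.
Hypothesis I2 : forall mu nu, \sum_a E mu a * m a nu = (mu == nu)%:R.

Lemma sum_dl (F : 'I_d -> R) j : \sum_i (i == j)%:R * F i = F j.
Proof.
rewrite (bigD1 j) //= eqxx mul1r big1 ?addr0 // => i /negbTE ->; exact: mul0r.
Qed.

Lemma sum_dr (F : 'I_d -> R) j : \sum_i F i * (i == j)%:R = F j.
Proof. by rewrite -[RHS](sum_dl F); apply: eq_bigr => i _; rewrite mulrC. Qed.

Lemma sum_dl' (F : 'I_d -> R) j : \sum_i (j == i)%:R * F i = F j.
Proof. by rewrite -[RHS](sum_dl F); apply: eq_bigr => i _; rewrite eq_sym. Qed.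

Lemma sum_dr' (F : 'I_d -> R) j : \sum_i F i * (j == i)%:R = F j.
Proof. by rewrite -[RHS](sum_dl F); apply: eq_bigr => i _; rewrite eq_sym mulrC. Qed.

Lemma L1 (W : 'I_d -> R) nu : \sum_c m c nu * (\sum_mu E mu c * W mu) = W nu.
Proof.
transitivity (\sum_mu (\sum_c E mu c * m c nu) * W mu); last first.
  by under eq_bigr do rewrite I2; exact: sum_dl.
under eq_bigr do rewrite mulr_sumr; rewrite exchange_big /=.
apply: eq_bigr => mu _; rewrite mulr_suml; apply: eq_bigr => c _; ring.
Qed.

Lemma L2 (w : 'I_d -> R) p : \sum_mu E mu p * (\sum_c m c mu * w c) = w p.
Proof.
transitivity (\sum_c (\sum_mu m c mu * E mu p) * w c); last first.
  by under eq_bigr do rewrite I1; exact: sum_dl.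
under eq_bigr do rewrite mulr_sumr; rewrite exchange_big /=.
apply: eq_bigr => c _; rewrite mulr_suml; apply: eq_bigr => mu _; ring.
Qed.

Lemma L1inj (W : 'I_d -> R) : (forall c, \sum_mu E mu c * W mu = 0) -> forall nu, W nu = 0.
Proof. by move=> H nu; rewrite -L1; apply: big1 => c _; rewrite H mulr0. Qed.

Lemma L3inj (X : 'I_d -> 'I_d -> R) :
  (forall p q, \sum_mu \sum_nu E mu p * E nu q * X mu nu = 0) -> forall mu nu, X mu nu = 0.
Proof.
move=> H mu nu; move: mu; apply: L1inj => p; move: nu.
apply: L1inj => q; rewrite -[RHS](H p q) exchange_big /=.
apply: eq_bigr => nu _; rewrite mulr_sumr; apply: eq_bigr => mu _; ring.
Qed.

Definition Cf (D : 'I_d -> 'I_d -> 'I_d -> R) c p q :=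
  \sum_mu \sum_rho E mu p * E rho q * D c mu rho.
Definition Om (D : 'I_d -> 'I_d -> 'I_d -> R) a b nu :=
  2^-1 * ( - (\sum_c m c nu *
                  (\sum_mu \sum_rho E rho b * E mu a * D c mu rho))
             + \sum_mu E mu b * D a mu nu
             - \sum_mu E mu a * D b mu nu).
Definition ff D a b c := 2^-1 * (- Cf D c a b + Cf D a b c - Cf D b a c).
Definition Tor D (W : 'I_d -> 'I_d -> 'I_d -> R) a mu nu :=
  D a mu nu + \sum_b (W a b mu * m b nu - W a b nu * m b mu).
Definition wf (W : 'I_d -> 'I_d -> 'I_d -> R) a b c := \sum_mu E mu c * W a b mu.

Lemma Cf_swap D a b c :
  \sum_mu E mu b * D a mu c = \sum_c' m c' c * Cf D a b c'.
Proof.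
rewrite -(L1 (fun nu => \sum_mu E mu b * D a mu nu) c).
apply: eq_bigr => c' _; congr (_ * _).
rewrite /Cf exchange_big /=; apply: eq_bigr => rho _; rewrite mulr_sumr.
by apply: eq_bigr => mu _; ring.
Qed.

Lemma Om_frame D a b nu : Om D a b nu = \sum_c m c nu * ff D a b c.
Proof.
have e0 c : \sum_mu \sum_rho E rho b * E mu a * D c mu rho = Cf D c a b.
  by apply: eq_bigr => mu _; apply: eq_bigr => rho _; ring.
rewrite /Om (Cf_swap D a b nu) (Cf_swap D b a nu).
under eq_bigr do rewrite e0.
rewrite -sumrN -sumrD' -sumrB mulr_sumr; apply: eq_bigr => c _.
rewrite /ff; ring.
Qed.

Lemma sum3 (F G : 'I_d -> 'I_d -> R) p q :
  \sum_mu \sum_nu E mu p * E nu q * (\sum_b F b mu * G b nu) =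
  \sum_b (\sum_mu E mu p * F b mu) * (\sum_nu E nu q * G b nu).
Proof.
rewrite [RHS](eq_bigr (fun b => \sum_mu \sum_nu E mu p * F b mu * (E nu q * G b nu)));
  last first.
  by move=> b _; rewrite mulr_suml; apply: eq_bigr => mu _; rewrite mulr_sumr.
rewrite [RHS]exchange_big /=; apply: eq_bigr => mu _.
rewrite [RHS]exchange_big /=; apply: eq_bigr => nu _.
by rewrite mulr_sumr; apply: eq_bigr => b _; ring.
Qed.

Lemma T_frame D W a p q :
  \sum_mu \sum_nu E mu p * E nu q * Tor D W a mu nu =
  Cf D a p q + wf W a q p - wf W a p q.
Proof.
have -> : \sum_mu \sum_nu E mu p * E nu q * Tor D W a mu nu =
  Cf D a p q + \sum_mu \sum_nu E mu p * E nu q * (\sum_b W a b mu * m b nu)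
   - \sum_mu \sum_nu E mu p * E nu q * (\sum_b m b mu * W a b nu).
  rewrite /Cf -sumrD' -sumrB /=; apply: eq_bigr => mu _.
  rewrite -sumrD' -sumrB /=; apply: eq_bigr => nu _.
  rewrite /Tor sumrB.
  have -> : \sum_b W a b nu * m b mu = \sum_b m b mu * W a b nu.
    by apply: eq_bigr => b _; rewrite mulrC.
  ring.
have I1' b q' : \sum_nu E nu q' * m b nu = (b == q')%:R.
  by rewrite -I1; apply: eq_bigr => nu _; rewrite mulrC.
rewrite !sum3; congr (_ + _ - _).
  by under eq_bigr do rewrite I1'; exact: sum_dr.
by under eq_bigr do rewrite I1'; exact: sum_dl.
Qed.

Lemma Cf_tor D W :
  (forall a mu nu, Tor D W a mu nu = 0) ->
  forall a' p q, Cf D a' p q = wf W a' p q - wf W a' q p.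
Proof.
move=> T0 a' p q.
apply/eqP; rewrite -subr_eq0 -[_ - _]addr0; apply/eqP.
have := T_frame D W a' p q.
rewrite (eq_bigr (fun _ => 0)); last first.
  by move=> mu _; apply: big1 => nu0 _; rewrite T0 mulr0.
rewrite big1 // => /esym E0; rewrite -[X in _ = X]E0; ring.
Qed.

Lemma Om_unique D W :
  (forall a b nu, W a b nu = - W b a nu) ->
  (forall a mu nu, Tor D W a mu nu = 0) ->
  forall a b nu, Om D a b nu = W a b nu.
Proof.
move=> Wa T0 a b nu.
rewrite Om_frame -(L1 (W a b) nu); apply: eq_bigr => c _; congr (_ * _).
have HC := Cf_tor T0.
have wa a' b' c' : wf W a' b' c' = - wf W b' a' c'.
  by rewrite /wf -sumrN; apply: eq_bigr => mu _; rewrite Wa mulrN.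
rewrite /ff !HC (wa c a b) (wa c b a) (wa b a c) -/(wf W a b c).
by field.
Qed.

Lemma Cf_anti D : (forall c mu rho, D c mu rho = - D c rho mu) ->
  forall a p q, Cf D a p q = - Cf D a q p.
Proof.
move=> Da a p q; rewrite /Cf exchange_big /= -sumrN; apply: eq_bigr => mu _.
by rewrite -sumrN; apply: eq_bigr => rho _; rewrite Da; ring.
Qed.

Lemma Om_torsion D : (forall c mu rho, D c mu rho = - D c rho mu) ->
  forall a mu nu, Tor D (Om D) a mu nu = 0.
Proof.
move=> Da a; apply: L3inj => p q; rewrite T_frame.
have wO a' b' c' : wf (Om D) a' b' c' = ff D a' b' c'.
  by rewrite /wf; under eq_bigr do rewrite Om_frame; rewrite L2.
rewrite !wO /ff (Cf_anti Da a q p); by field.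
Qed.

Lemma Om_anti D : (forall c mu rho, D c mu rho = - D c rho mu) ->
  forall a b nu, Om D a b nu = - Om D b a nu.
Proof.
move=> Da a b nu; rewrite !Om_frame -sumrN; apply: eq_bigr => c _.
by rewrite /ff (Cf_anti Da c a b); ring.
Qed.

Lemma EE p q :
  \sum_mu \sum_rho E mu p * E rho q * (m rho mu - m mu rho) = E p q - E q p.
Proof.
have -> : \sum_mu \sum_rho E mu p * E rho q * (m rho mu - m mu rho) =
  \sum_mu \sum_rho E rho q * (m rho mu * E mu p)
  - \sum_mu E mu p * (\sum_rho m mu rho * E rho q).
  rewrite -sumrB; apply: eq_bigr => mu _; rewrite mulr_sumr -sumrB.
  by apply: eq_bigr => rho _; ring.
rewrite exchange_big /=.
under eq_bigr do rewrite -mulr_sumr I1.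
under [X in _ - X]eq_bigr do rewrite I1.
by rewrite !sum_dr.
Qed.

Lemma swap3 (Y : 'I_d -> R) (A : 'I_d -> 'I_d -> R) (D' : 'I_d -> 'I_d -> 'I_d -> R) :
  \sum_c Y c * (\sum_mu \sum_rho A mu rho * D' c mu rho) =
  \sum_mu \sum_rho A mu rho * (\sum_c Y c * D' c mu rho).
Proof.
under eq_bigr do rewrite mulr_sumr.
rewrite exchange_big /=; apply: eq_bigr => mu _.
under eq_bigr do rewrite mulr_sumr.
rewrite exchange_big /=; apply: eq_bigr => rho _.
by rewrite mulr_sumr; apply: eq_bigr => c _; ring.
Qed.

Lemma Om_gauge D (Y : 'I_d -> R) (Lam : 'I_d -> 'I_d -> R) :
  (forall a, \sum_mu Y mu * m a mu = Y a) ->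
  (forall a mu, \sum_rho Y rho * D a mu rho = (a == mu)%:R - Lam a mu) ->
  (forall mu rho, \sum_c Y c * D c mu rho = m rho mu - m mu rho) ->
  (forall a b, \sum_mu E mu a * Lam b mu = \sum_mu E mu b * Lam a mu) ->
  forall a b, \sum_nu Y nu * Om D a b nu = 0.
Proof.
move=> c1 F1 F2 F3 a b.
have P1 : \sum_nu Y nu * (\sum_c m c nu *
      (\sum_mu \sum_rho E rho b * E mu a * D c mu rho)) = E a b - E b a.
  transitivity (\sum_c (\sum_nu Y nu * m c nu) *
      (\sum_mu \sum_rho E rho b * E mu a * D c mu rho)).
    under eq_bigr do rewrite mulr_sumr.
    rewrite exchange_big /=; apply: eq_bigr => c _.
    by rewrite mulr_suml; apply: eq_bigr => nu _; ring.
  under eq_bigr do rewrite c1.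
  rewrite swap3 -EE; apply: eq_bigr => mu _; apply: eq_bigr => rho _.
  by rewrite F2 [E rho b * _]mulrC.
have P2 a' b' : \sum_nu Y nu * (\sum_mu E mu b' * D a' mu nu) =
    E a' b' - \sum_mu E mu b' * Lam a' mu.
  transitivity (\sum_mu E mu b' * (\sum_nu Y nu * D a' mu nu)).
    under eq_bigr do rewrite mulr_sumr.
    rewrite exchange_big /=; apply: eq_bigr => mu _.
    by rewrite mulr_sumr; apply: eq_bigr => nu _; ring.
  under eq_bigr do rewrite F1 mulrBr.
  by rewrite sumrB sum_dr'.
rewrite /Om.
transitivity (2^-1 * (- (\sum_nu Y nu * (\sum_c m c nu *
      (\sum_mu \sum_rho E rho b * E mu a * D c mu rho)))
   + \sum_nu Y nu * (\sum_mu E mu b * D a mu nu)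
   - \sum_nu Y nu * (\sum_mu E mu a * D b mu nu))).
  rewrite -[in RHS]sumrN -[in RHS]sumrD' -[in RHS]sumrB [in RHS]mulr_sumr.
  by apply: eq_bigr => nu _; ring.
rewrite P1 !P2 F3; ring.
Qed.

Lemma radial D W (Y : 'I_d -> R) :
  (forall a mu nu, Tor D W a mu nu = 0) ->
  (forall a b, \sum_nu Y nu * W a b nu = 0) ->
  (forall b, \sum_nu Y nu * m b nu = Y b) ->
  forall a mu, \sum_nu Y nu * D a nu mu = \sum_b W a b mu * Y b.
Proof.
move=> T0 G c1 a mu.
have HD nu : D a nu mu = \sum_b (W a b mu * m b nu - W a b nu * m b mu).
  have := T0 a nu mu; rewrite /Tor => /eqP; rewrite addr_eq0 => /eqP ->.
  by rewrite -sumrN; apply: eq_bigr => b _; ring.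
under eq_bigr do rewrite HD mulr_sumr.
rewrite exchange_big /=; apply: eq_bigr => b _.
transitivity (W a b mu * (\sum_nu Y nu * m b nu) - m b mu * (\sum_nu Y nu * W a b nu)).
  by rewrite !mulr_sumr -sumrB; apply: eq_bigr => nu _; ring.
by rewrite c1 G mulr0 subr0.
Qed.

Lemma symm D W (Y : 'I_d -> R) (Lam : 'I_d -> 'I_d -> R) :
  (forall a mu nu, Tor D W a mu nu = 0) ->
  (forall a b nu, W a b nu = - W b a nu) ->
  (forall b mu, Lam b mu = (b == mu)%:R + \sum_c W b c mu * Y c) ->
  (forall mu rho, \sum_c Y c * D c mu rho = m rho mu - m mu rho) ->
  forall a b, \sum_mu E mu a * Lam b mu = \sum_mu E mu b * Lam a mu.
Proof.
move=> T0 Wa HL F2 a b.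
have iL a' b' : \sum_mu E mu a' * Lam b' mu = E b' a' + \sum_c Y c * wf W b' c a'.
  under eq_bigr do rewrite HL mulrDr.
  rewrite sumrD' sum_dr'; congr (_ + _).
  under eq_bigr do rewrite mulr_sumr.
  rewrite exchange_big /=; apply: eq_bigr => c _; rewrite /wf mulr_sumr.
  by apply: eq_bigr => mu _; ring.
have HC := Cf_tor T0.
have K p q : \sum_c Y c * (wf W c p q - wf W c q p) = E p q - E q p.
  rewrite -EE; under eq_bigr do rewrite -HC.
  rewrite /Cf swap3; apply: eq_bigr => mu _; apply: eq_bigr => rho _.
  by rewrite F2.
have wa a' b' c' : wf W a' b' c' = - wf W b' a' c'.
  by rewrite /wf -sumrN; apply: eq_bigr => mu _; rewrite Wa mulrN.
have K' : \sum_c Y c * wf W b c a - \sum_c Y c * wf W a c b = E a b - E b a.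
  rewrite -K -sumrB; apply: eq_bigr => c _; rewrite (wa c a b) (wa c b a); ring.
rewrite !iL; move: K'; lra.
Qed.

End Alg.

Section Pointwise.
Variables (R : realType) (d : nat).
Local Notation V := 'rV[R]_d.
Local Notation dl mu := (delta_mx ord0 mu : V).
Local Notation coord := (@Defs.coord R d).
Implicit Types (f g : V -> R).

Lemma partial_sum (I : Type) (r : seq I) (P : pred I) (F : I -> V -> R) x mu :
  (forall i, P i -> derivable (F i) x (dl mu)) ->
  derivable (fun y => \sum_(i <- r | P i) F i y) x (dl mu) /\
  partial mu (fun y => \sum_(i <- r | P i) F i y) x =
    \sum_(i <- r | P i) partial mu (F i) x.
Proof.
move=> H; elim: r => [|a r [IH1 IH2]].
  have -> : (fun y => \sum_(i <- [::] | P i) F i y) = (fun _ => 0).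
    by apply/funext => y; rewrite big_nil.
  rewrite big_nil; split; first exact: derivable_cst.
  by rewrite /partial; exact: (derive_cst (0 : R)).
have -> : (fun y => \sum_(i <- a :: r | P i) F i y) =
  (fun y => (if P a then F a y else 0) + \sum_(i <- r | P i) F i y).
  by apply/funext => y; rewrite big_cons; case: (P a); rewrite ?add0r.
have da : derivable (fun y => if P a then F a y else 0) x (dl mu).
  case: (boolP (P a)) => Pa; first exact: H.
  exact: derivable_cst.
split; first exact: derivableD.
rewrite partialD // IH2 big_cons; case: (boolP (P a)) => Pa //.
rewrite [partial _ _ _](_ : _ = 0) ?add0r //.
by rewrite /partial; exact: (derive_cst (0 : R)).
Qed.

Lemma dcond (g : 'I_d -> V -> R) (a : 'I_d) :
  (forall nu mu y, derivable (g nu) y (dl mu)) ->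
  (forall y, \sum_nu coord y nu * g nu y = coord y a) ->
  forall mu y, g mu y + \sum_nu coord y nu * partial mu (g nu) y = (mu == a)%:R.
Proof.
move=> dg H mu y.
have E : (fun y => \sum_nu coord y nu * g nu y) = (fun y => coord y a).
  by apply/funext => z; exact: H.
have := congr1 (fun F => partial mu F y) E => /=.
have dc nu : derivable (fun y => coord y nu) y (dl mu) := (partial_coord mu nu y).1.
have PS := @partial_sum _ (index_enum 'I_d) (fun _ => true)
   (fun nu y => coord y nu * g nu y) y mu.
rewrite (PS _).2; last first.
  by move=> nu _; apply: (derivableM (dc nu) (dg nu mu y)).
rewrite (partial_coord mu a y).2 => <-.
under [RHS]eq_bigr => nu _ do
  rewrite (@partialM R d (fun y => coord y nu) (g nu) y mu (dc nu) (dg nu mu y))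
          (partial_coord mu nu y).2.
by rewrite sumrD' sum_dl'.
Qed.

Lemma lie_dform (e : frame R d) a mu y :
  (forall a nu mu y, derivable (e a nu) y (dl mu)) ->
  (forall a y, \sum_nu coord y nu * e a nu y = coord y a) ->
  lie_r e a mu y = (a == mu)%:R + \sum_nu coord y nu * dform e a nu mu y.
Proof.
move=> de c1.
have H := dcond (g := e a) (de a) (c1 a) mu y.
have H' : (a == mu)%:R = e a mu y + \sum_nu coord y nu * partial mu (e a nu) y.
  by rewrite eq_sym H.
rewrite /lie_r /dform H'.
under [X in _ = _ + X]eq_bigr do rewrite mulrBr.
rewrite sumrB; ring.
Qed.

Lemma dform_c2 (e : frame R d) mu rho y :
  (forall a nu mu y, derivable (e a nu) y (dl mu)) ->
  (forall mu y, \sum_a coord y a * e a mu y = coord y mu) ->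
  \sum_c coord y c * dform e c mu rho y = e rho mu y - e mu rho y.
Proof.
move=> de c2.
have H1 := dcond (g := fun c => e c rho) (fun c => de c rho) (c2 rho) mu y.
have H2 := dcond (g := fun c => e c mu) (fun c => de c mu) (c2 mu) rho y.
rewrite /dform; under eq_bigr do rewrite mulrBr.
rewrite sumrB; move: H1 H2; rewrite eq_sym => H1 H2.
have : (mu == rho)%:R = (rho == mu)%:R :> R by rewrite eq_sym.
move: H1 H2; lra.
Qed.

Lemma I1e (e : frame R d) x : emx e x \in unitmx ->
  forall a b, \sum_mu e a mu x * edual e b mu x = (a == b)%:R.
Proof.
move=> u a b; have := congr1 (fun M : 'M[R]_d => M a b) (mulmxV u).
by rewrite !mxE => <-; apply: eq_bigr => mu _; rewrite /edual mxE.
Qed.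

Lemma I2e (e : frame R d) x : emx e x \in unitmx ->
  forall mu nu, \sum_a edual e a mu x * e a nu x = (mu == nu)%:R.
Proof.
move=> u mu nu; have := congr1 (fun M : 'M[R]_d => M mu nu) (mulVmx u).
by rewrite !mxE => <-; apply: eq_bigr => a _; rewrite /edual mxE.
Qed.

End Pointwise.

Section Integ.
Variables (R : realType) (d : nat).
Local Notation V := 'rV[R]_d.
Local Notation dl mu := (delta_mx ord0 mu : V).
Local Notation coord := (@Defs.coord R d).

Lemma contRD (f g : R -> R) : continuous f -> continuous g ->
  continuous (fun t => f t + g t).
Proof. by move=> cf cg t; exact: (continuousD (cf t) (cg t)). Qed.

Lemma contRM (f g : R -> R) : continuous f -> continuous g ->
  continuous (fun t => f t * g t).
Proof. by move=> cf cg t; exact: (continuousM (cf t) (cg t)). Qed.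

Lemma contR_cst (c : R) : continuous (fun _ : R => c).
Proof. by move=> t; exact: cst_continuous. Qed.

Lemma contR_id : continuous (fun t : R => t).
Proof. by move=> t; exact: cvg_id. Qed.

Lemma contR_sum (I : Type) (r : seq I) (P : pred I) (G : I -> R -> R) :
  (forall i, continuous (G i)) -> continuous (fun t => \sum_(i <- r | P i) G i t).
Proof.
move=> H; elim: r => [|a r IH].
  have -> : (fun t => \sum_(i <- [::] | P i) G i t) = (fun _ => 0).
    by apply/funext => t; rewrite big_nil.
  exact: contR_cst.
have -> : (fun t => \sum_(i <- a :: r | P i) G i t) =
  (fun t => (if P a then G a t else 0) + \sum_(i <- r | P i) G i t).
  by apply/funext => t; rewrite big_cons; case: (P a); rewrite ?add0r.
apply: contRD => //; case: (P a); [exact: H|exact: contR_cst].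
Qed.

Lemma cont_line (F : V -> R) (x : V) : continuous F -> continuous (fun t : R => F (t *: x)).
Proof.
move=> cF t; apply: (@continuous_comp _ _ _ (fun k : R => k *: x) F).
  exact: scalel_continuous.
exact: cF.
Qed.

Lemma cint (g : R -> R) : continuous g ->
  (@lebesgue_measure R).-integrable `[0%R, 1%R] (EFin \o g).
Proof.
move=> cg; apply: continuous_compact_integrable; first exact: segment_compact.
exact: continuous_subspaceT.
Qed.

Lemma Rint01_0 : \int[lebesgue_measure]_(t in `[0%R, 1%R]) (0 : R) = 0.
Proof. by rewrite Rintegral_cst ?mul0r //; exact: measurable_itv. Qed.

Lemma Rint_lin (I : Type) (r : seq I) (P : pred I) (c : I -> R) (G : I -> R -> R) :
  (forall i, continuous (G i)) ->
  \sum_(i <- r | P i) c i * (\int[lebesgue_measure]_(t in `[0%R, 1%R]) G i t) =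
  \int[lebesgue_measure]_(t in `[0%R, 1%R]) (\sum_(i <- r | P i) c i * G i t).
Proof.
move=> H; elim: r => [|a r IH].
  rewrite big_nil; under eq_Rintegral do rewrite big_nil.
  by rewrite Rint01_0.
rewrite big_cons; under [RHS]eq_Rintegral do rewrite big_cons.
case: (P a) => //.
rewrite (@RintegralD _ _ _ lebesgue_measure _ (fun t : R => c a * G a t)
   (fun t : R => \sum_(j <- r | P j) c j * G j t)); first last.
- exact: cint (contR_sum (fun i => contRM (@contR_cst (c i)) (H i))).
- exact: cint (contRM (@contR_cst (c a)) (H a)).
- exact: measurable_itv.
by rewrite IH RintegralZl //; exact: cint.
Qed.

Lemma sum_anti (W : 'I_d -> 'I_d -> R) (Y : 'I_d -> R) :
  (forall a b, W a b = - W b a) -> \sum_a \sum_b Y a * Y b * W a b = 0.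
Proof.
move=> Wa.
have : \sum_a \sum_b Y a * Y b * W a b = - \sum_a \sum_b Y a * Y b * W a b.
  rewrite {1}exchange_big /= -sumrN; apply: eq_bigr => a _.
  rewrite -sumrN; apply: eq_bigr => b _; rewrite Wa; ring.
lra.
Qed.

End Integ.

Section PartA.
Variables (R : realType) (d : nat).
Local Notation V := 'rV[R]_d.
Local Notation dl mu := (delta_mx ord0 mu : V).
Local Notation coord := (@Defs.coord R d).

Lemma coordZ (t : R) (y : V) nu : coord (t *: y) nu = t * coord y nu.
Proof. by rewrite /Defs.coord mxE. Qed.

Lemma contG (om : spin_conn R d) a mu (y : V) :
  (forall a b mu, smooth (om a b mu)) ->
  continuous (fun t : R => \sum_b om a b mu (t *: y) * t * coord y b).
Proof.
move=> som; apply: contR_sum => b; apply: contRM; last exact: contR_cst.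
apply: contRM; last exact: contR_id.
by apply: cont_line; apply: smooth_cont.
Qed.

Lemma partA (om : spin_conn R d) : space_i om ->
  space_ii (e_of_omega om) /\
  (forall a b mu x, omega_of_e (e_of_omega om) a b mu x = om a b mu x).
Proof.
case=> som [oanti [ogauge [ve tors]]].
have de : forall a nu mu y, derivable (e_of_omega om a nu) y (dl mu).
  by move=> a nu mu y; apply: smooth_der; exact: ve.1.
have c1 : forall a y, \sum_nu coord y nu * e_of_omega om a nu y = coord y a.
  move=> a y; rewrite /e_of_omega.
  under eq_bigr do rewrite mulrDr.
  rewrite sumrD' sum_dr' (Rint_lin _ _ _ (fun nu => contG (a := a) (mu := nu) (y := y) som)).
  have Z t : \sum_nu coord y nu * (\sum_b om a b nu (t *: y) * t * coord y b) = 0.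
    transitivity (\sum_b coord y b * (\sum_nu coord (t *: y) nu * om a b nu (t *: y))).
      under eq_bigr do rewrite mulr_sumr.
      rewrite exchange_big /=; apply: eq_bigr => b _.
      rewrite mulr_sumr; apply: eq_bigr => nu _; rewrite coordZ; ring.
    by apply: big1 => b _; rewrite ogauge mulr0.
  under eq_Rintegral => t _ do rewrite Z.
  by rewrite Rint01_0 addr0.
have c2 : forall mu y, \sum_a coord y a * e_of_omega om a mu y = coord y mu.
  move=> mu y; rewrite /e_of_omega.
  under eq_bigr do rewrite mulrDr.
  rewrite sumrD' sum_dr (Rint_lin _ _ _ (fun a => contG (a := a) (mu := mu) (y := y) som)).
  have Z t : \sum_a coord y a * (\sum_b om a b mu (t *: y) * t * coord y b) = 0.
    rewrite -[RHS](@sum_anti _ _ (fun a b => t * om a b mu (t *: y)) (coord y)); last first.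
      by move=> a b; rewrite oanti mulrN.
    apply: eq_bigr => a _; rewrite mulr_sumr; apply: eq_bigr => b _; ring.
  under eq_Rintegral => t _ do rewrite Z.
  by rewrite Rint01_0 addr0.
have OmE : forall a b mu x, omega_of_e (e_of_omega om) a b mu x = om a b mu x.
  move=> a b mu x; have u := ve.2 x.
  exact: (Om_unique (I1e u) (I2e u) (D := fun c mu rho => dform (e_of_omega om) c mu rho x)
     (W := fun a b mu => om a b mu x) (fun a b nu => oanti a b nu x)
     (fun a mu nu => tors a mu nu x) a b mu).
split => //; split => //; split => //; split => //.
move=> a b x; have u := ve.2 x.
have HL : forall b mu, lie_r (e_of_omega om) b mu x =
    (b == mu)%:R + \sum_c om b c mu x * coord x c.
  move=> b' mu'; rewrite (lie_dform _ _ _ de c1); congr (_ + _).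
  exact: (radial (D := fun c mu rho => dform (e_of_omega om) c mu rho x)
     (W := fun a b mu => om a b mu x) (fun a mu nu => tors a mu nu x)
     (fun a b => ogauge a b x) (fun b => c1 b x) b' mu').
exact: (symm (I1e u) (D := fun c mu rho => dform (e_of_omega om) c mu rho x)
     (W := fun a b mu => om a b mu x) (fun a mu nu => tors a mu nu x)
     (fun a b nu => oanti a b nu x) HL (fun mu rho => dform_c2 mu rho x de c2) a b).
Qed.

End PartA.

Section PartB.
Variables (R : realType) (d : nat).
Local Notation V := 'rV[R]_d.
Local Notation dl mu := (delta_mx ord0 mu : V).
Local Notation coord := (@Defs.coord R d).
Implicit Types (f g : V -> R).

Lemma smoothN f : smooth f -> smooth (fun x => - f x).
Proof.
move=> sf; have -> : (fun x => - f x) = (fun x => (-1) * f x).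
  by apply/funext => x; rewrite mulN1r.
by apply: smoothM => //; exact: smooth_cst.
Qed.

Lemma smoothB f g : smooth f -> smooth g -> smooth (fun x => f x - g x).
Proof. by move=> sf sg; apply: smoothD => //; exact: smoothN. Qed.

Lemma smooth_omega (e : frame R d) : is_vielbein e ->
  forall a b nu, smooth (omega_of_e e a b nu).
Proof.
move=> ve a b nu; have se := ve.1; have sE := smooth_edual ve.
have sD c mu rho : smooth (dform e c mu rho).
  by apply: smoothB; apply: smooth_partial; apply: se.
rewrite /omega_of_e; apply: smoothM; first exact: smooth_cst.
apply: smoothB; first apply: smoothD.
- apply: smoothN; apply: smooth_sum => c _; apply: smoothM => //.
  apply: smooth_sum => mu _; apply: smooth_sum => rho _.
  by apply: smoothM => //; apply: smoothM.
- by apply: smooth_sum => mu _; apply: smoothM.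
- by apply: smooth_sum => mu _; apply: smoothM.
Qed.

Lemma ftc_line (e : frame R d) (om : spin_conn R d) a mu (x : V) :
  smooth (e a mu) -> (forall b, smooth (om a b mu)) ->
  (forall y, lie_r e a mu y = (a == mu)%:R + \sum_b om a b mu y * coord y b) ->
  e_of_omega om a mu x = e a mu x.
Proof.
move=> se som rad.
set del : R := (a == mu)%:R.
pose F (t : R) := t * (e a mu (t *: x) - del).
pose G (t : R) := \sum_b om a b mu (t *: x) * t * coord x b.
have cG : continuous G.
  apply: contR_sum => b; apply: contRM; last exact: contR_cst.
  apply: contRM; last exact: contR_id.
  by apply: cont_line; apply: smooth_cont.
have C1 := C1_is_derive (smooth_der se) (fun nu => smooth_cont (smooth_partial nu se)).
have hl t : is_derive t (1 : R) (fun s : R => e a mu (s *: x))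
    (\sum_nu x ord0 nu * partial nu (e a mu) (t *: x)).
  have D1 := C1 (t *: x) x.
  have dd : derivable (e a mu) (0 + t *: x) x.
    by rewrite add0r; exact: (@ex_derive _ _ _ _ _ _ _ D1).
  have L := is_derive_line dd.
  rewrite add0r (@derive_val _ _ _ _ _ _ _ D1) in L.
  have -> : (fun s : R => e a mu (s *: x)) = (fun s : R => e a mu (0 + s *: x)).
    by apply/funext => s; rewrite add0r.
  exact: L.
have hF t : is_derive t (1 : R) F (G t).
  have hg : is_derive t (1 : R) (fun s : R => e a mu (s *: x) - del)
      (\sum_nu x ord0 nu * partial nu (e a mu) (t *: x) - 0).
    exact: (is_deriveB (hl t) (is_derive_cst del t 1)).
  have hid : is_derive t (1 : R) (fun s : R => s) 1 := is_derive_id t 1.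
  have hM := is_deriveM hid hg.
  apply: (is_derive_eq hM).
  have := rad (t *: x); rewrite /lie_r.
  under eq_bigr do rewrite coordZ.
  rewrite /G; under [in RHS]eq_bigr do rewrite coordZ.
  have E1 : \sum_nu t * coord x nu * partial nu (e a mu) (t *: x) =
            t * \sum_nu x ord0 nu * partial nu (e a mu) (t *: x).
    by rewrite mulr_sumr; apply: eq_bigr => nu _; rewrite /Defs.coord mulrA.
  have E2 : \sum_b om a b mu (t *: x) * (t * coord x b) =
            \sum_b om a b mu (t *: x) * t * coord x b.
    by apply: eq_bigr => b _; rewrite mulrA.
  rewrite E1 E2 -/del => H.
  change (t * (\sum_nu x ord0 nu * partial nu (e a mu) (t *: x) - 0) +
    (e a mu (t *: x) - del) * 1 = \sum_b om a b mu (t *: x) * t * coord x b).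
  rewrite subr0 mulr1; move: H; lra.
have dF : derivable_oo_LRcontinuous F 0 1.
  have cF t : {for t, continuous F}.
    apply: differentiable_continuous; apply/derivable1_diffP.
    exact: (@ex_derive _ _ _ _ _ _ _ (hF t)).
  split.
  - by move=> t _; exact: (@ex_derive _ _ _ _ _ _ _ (hF t)).
  - exact: cvg_at_right_filter (cF 0).
  - exact: cvg_at_left_filter (cF 1).
have FG : {in `]0, 1[, (F^`())%classic =1 G}.
  by move=> t _; rewrite derive1E; exact: (@derive_val _ _ _ _ _ _ _ (hF t)).
have := continuous_FTC2 ltr01 (continuous_subspaceT cG) dF FG.
move=> H.
have -> : e_of_omega om a mu x =
    del + fine (\int[lebesgue_measure]_(t in `[0%R, 1%R]) (G t)%:E)%E by [].
rewrite H -EFinB /= /F scale1r mul1r mul0r subr0.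
by rewrite addrC subrK.
Qed.

Lemma partB (e : frame R d) : space_ii e ->
  space_i (omega_of_e e) /\
  (forall a mu x, e_of_omega (omega_of_e e) a mu x = e a mu x).
Proof.
case=> ve [c1 [c2 sym]].
have de : forall a nu mu y, derivable (e a nu) y (dl mu).
  by move=> a nu mu y; apply: smooth_der; exact: ve.1.
have Dan x : forall c mu rho, dform e c mu rho x = - dform e c rho mu x.
  by move=> c mu rho; rewrite /dform opprB.
have Tor0 : forall a mu nu x, dform e a mu nu x +
    \sum_b (omega_of_e e a b mu x * e b nu x - omega_of_e e a b nu x * e b mu x) = 0.
  move=> a mu nu x; have u := ve.2 x.
  exact: (Om_torsion (I1e u) (I2e u) (D := fun c mu rho => dform e c mu rho x)
     (Dan x) a mu nu).
have Oanti : forall a b mu x, omega_of_e e a b mu x = - omega_of_e e b a mu x.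
  move=> a b mu x; have u := ve.2 x.
  exact: (Om_anti (I2e u) (D := fun c mu rho => dform e c mu rho x) (Dan x) a b mu).
have Lam_eq a mu y : lie_r e a mu y =
    (a == mu)%:R + \sum_nu coord y nu * dform e a nu mu y.
  exact: lie_dform.
have gauge : forall a b x, \sum_nu coord x nu * omega_of_e e a b nu x = 0.
  move=> a b x; have u := ve.2 x.
  apply: (Om_gauge (I1e u) (D := fun c mu rho => dform e c mu rho x)
     (Y := coord x) (Lam := fun a mu => lie_r e a mu x)).
  - exact: (fun a => c1 a x).
  - move=> a' mu'; rewrite Lam_eq opprD addrA subrr add0r -sumrN.
    by apply: eq_bigr => rho _; rewrite Dan mulrN.
  - exact: (fun mu rho => dform_c2 mu rho x de c2).
  - exact: (fun a b => sym a b x).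
have rad : forall a mu y, lie_r e a mu y =
    (a == mu)%:R + \sum_b omega_of_e e a b mu y * coord y b.
  move=> a mu y; rewrite Lam_eq; congr (_ + _).
  exact: (radial (D := fun c mu rho => dform e c mu rho y)
     (W := fun a b mu => omega_of_e e a b mu y) (fun a mu nu => Tor0 a mu nu y)
     (fun a b => gauge a b y) (fun b => c1 b y) a mu).
have som := smooth_omega ve.
have eqe : forall a mu x, e_of_omega (omega_of_e e) a mu x = e a mu x.
  move=> a mu x.
  have := @ftc_line e (omega_of_e e) a mu x (ve.1 a mu) (fun b => som a b mu).
  apply; exact: (rad a mu).
have eqf : e_of_omega (omega_of_e e) = e.
  by apply/funext => a; apply/funext => mu; apply/funext => x; exact: eqe.
split => //.
split; first exact: som.
split; first exact: Oanti.
split; first exact: gauge.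
by rewrite eqf; split.
Qed.

End PartB.

Theorem theorem2 (R : realType) (d : nat) :
  (forall om : spin_conn R d,
     space_i om ->
     space_ii (e_of_omega om) /\
     (forall a b mu x, omega_of_e (e_of_omega om) a b mu x = om a b mu x)) /\
  (forall e : frame R d,
     space_ii e ->
     space_i (omega_of_e e) /\
     (forall a mu x, e_of_omega (omega_of_e e) a mu x = e a mu x)).
Proof. by split; [exact: partA | exact: partB]. Qed.
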